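(* Let $p\ge2$ and $n,\ell,t$ be positive integers with $n>\ell$. For each $0\le r\le n-\ell$ let $\xi_r$ be a prime with $\max(t,r)<\xi_r\le2\max(t,r)$, and let $\mathbf{a}_r^*\in\{0,\dots,\xi_r-1\}^t$ maximize $|\mathcal{C}_{p,t,\ell}(n-\ell,r,\mathbf{a},\xi_r)|$ over $\mathbf{a}\in\{0,\dots,\xi_r-1\}^t$. Define $$\mathcal{C}^1=\bigl\{\phi^{-1}(\mathbf{y},\mathbf{z}):\ \mathbf{y}\in\mathbb{Z}_p^\ell,\ \mathbf{z}\in\mathcal{C}_{p,t,\ell}(n-\ell,r,\mathbf{a}_r^*,\xi_r)\text{ where }r=\mathrm{wt}_H(\mathbf{z})\bigr\}.$$ Then $$|\mathcal{C}^1|\ge p^\ell\sum_{r=0}^{n-\ell}\frac{\binom{n-\ell}{r}(p-1)^r}{(2\max(t,r))^t}.$$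
   Context: $\mathbb{Z}_p=\{0,1,\dots,p-1\}$ with arithmetic mod $p$. The bijection $\phi:\mathbb{Z}_p^n\to\mathbb{Z}_p^\ell\times\mathbb{Z}_p^{n-\ell}$ is $\phi(\mathbf{x})=(\mathbf{y},\mathbf{z})$ with $\mathbf{y}=(x_1,\dots,x_\ell)$ and $z_i=x_{i+\ell}-x_i$ for $1\le i\le n-\ell$. Any $\mathbf{z}\in\mathbb{Z}_p^m$ of Hamming weight $r$ is written uniquely as $\mathbf{z}=0^{b_1}u_10^{b_2}u_2\cdots u_r0^{b_{r+1}}$ with $u_i\ne0$, $b_i\ge0$. For a prime $\xi$ and $\mathbf{a}\in\{0,\dots,\xi-1\}^t$, $$\mathcal{C}_{p,t,\ell}(m,r,\mathbf{a},\xi)=\Bigl\{\mathbf{z}\in\mathbb{Z}_p^m:\ \mathrm{wt}_H(\mathbf{z})=r,\ \sum_{i=1}^{r+1}i^q\Bigl\lfloor\frac{b_i}{\ell}\Bigr\rfloor\equiv a_q\pmod{\xi}\ \forall\,1\le q\le t\Bigr\}.$$ *)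

(* Defs.v *)
From HB Require Import structures.
From mathcomp Require Import all_boot all_order all_algebra.
From mathcomp Require Import zify.
Set Implicit Arguments. Unset Strict Implicit. Unset Printing Implicit Defensive.
Import Order.TTheory GRing.Theory Num.Theory.

(* Z_p is 'Z_p (valid since p >= 2 is assumed in the theorem). *)

Definition wtH (p m : nat) (z : {ffun 'I_m -> 'Z_p}) : nat :=
  #|[set i | z i != 0%R]|.

(* Zero runs: for a sequence z = 0^{b_1} u_1 0^{b_2} ... u_r 0^{b_{r+1}}
   (u_i <> 0), zruns z = [:: b_1; ...; b_{r+1}]. *)
Fixpoint zruns (s : seq nat) : seq nat :=
  match s with
  | [::] => [:: 0]
  | x :: s' => let r := zruns s' in
               if x == 0 then (head 0 r).+1 :: behead r else 0 :: r
  end.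

Definition blocks (p m : nat) (z : {ffun 'I_m -> 'Z_p}) : seq nat :=
  zruns [seq (val (z i)) | i <- enum 'I_m].

Definition blocksum (p m l q : nat) (z : {ffun 'I_m -> 'Z_p}) : nat :=
  \sum_(i < size (blocks z)) i.+1 ^ q * (nth 0 (blocks z) i %/ l).

(* C_{p,t,l}(m, r, a, xi); a q is the q-th coordinate (1 <= q <= t). *)
Definition CC (p t l m r : nat) (a : nat -> nat) (xi : nat) :
  {set {ffun 'I_m -> 'Z_p}} :=
  [set z | (wtH z == r) &&
           [forall q : 'I_t, @blocksum p m l q.+1 z == a q.+1 %[mod xi]]].

Lemma shift_lt (n l : nat) (i : 'I_(n - l)) : i + l < n.
Proof. have := ltn_ord i; lia. Qed.

Definition phiz (p n l : nat) (x : {ffun 'I_n -> 'Z_p}) :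
  {ffun 'I_(n - l) -> 'Z_p} :=
  [ffun i : 'I_(n - l) => (x (Ordinal (shift_lt i)) - x (widen_ord (leq_subr l n) i))%R].

(* C^1 = { phi^{-1}(y,z) : y arbitrary, z in C(n-l, wt z, a*_{wt z}, xi_{wt z}) },
   written as the preimage under the bijection phi. *)
Definition C1 (p n l t : nat) (xi : nat -> nat) (a : nat -> nat -> nat) :
  {set {ffun 'I_n -> 'Z_p}} :=
  [set x | let z := @phiz p n l x in
           z \in CC p t l (n - l) (wtH z) (a (wtH z)) (xi (wtH z))].
Arguments CC p t l m r a xi : clear implicits.
Arguments C1 p n l t xi a : clear implicits.

(* Main.v *)
Require Import Defs.
From HB Require Import structures.
From mathcomp Require Import all_boot all_order all_algebra zify.
Import Order.TTheory GRing.Theory Num.Theory.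

Lemma card_Zp_ (p : nat) : 1 < p -> #|'Z_p| = p.
Proof. by move=> hp; rewrite card_ord Zp_cast. Qed.

Lemma card_weight (p m r : nat) : 1 < p ->
  #|[set z : {ffun 'I_m -> 'Z_p} | wtH z == r]| = 'C(m, r) * (p - 1) ^ r.
Proof.
move=> hp.
have hnz : #|[pred x : 'Z_p | x != 0%R]| = (p - 1)%N.
  have h := cardC1 (0%R : 'Z_p); rewrite (@card_Zp_ p hp) in h.
  rewrite subn1 -h; by apply: eq_card => x; rewrite !inE.
have fib : forall A : {set 'I_m},
    #|[pred z : {ffun 'I_m -> 'Z_p} | [set i | z i != 0%R] == A]| = ((p - 1) ^ #|A|)%N.
  move=> A; rewrite -hnz -(card_pffun_on (0%R : 'Z_p)).
  apply: eq_card => z; rewrite inE.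
  apply/eqP/pffun_onP.
    move=> <-; split.
      by apply/subsetP => i; rewrite !inE.
    by move=> _ /imageP [x hx ->]; move: hx; rewrite !inE.
  move=> [/supportP hs him].
  apply/setP => i; rewrite inE.
  case hi: (i \in A).
    by apply: him; apply/imageP; exists i.
  by rewrite hs ?hi // eqxx.
rewrite -sum1_card.
rewrite (partition_big (fun z : {ffun 'I_m -> 'Z_p} => [set i | z i != 0%R])
          (fun A : {set 'I_m} => #|A| == r)); last first.
  by move=> z; rewrite inE /wtH.
transitivity (\sum_(A : {set 'I_m} | #|A| == r) (p - 1) ^ r).
  apply: eq_bigr => A /eqP hA.
  rewrite -hA -fib sum1dep_card; apply: eq_card => z; rewrite !inE /wtH.
  by case E: ([set i | z i != 0%R] == A); rewrite ?andbF // (eqP E) eqxx.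
rewrite sum_nat_const.
congr (_ * _).
have := card_draws 'I_m r; rewrite card_ord => <-.
by apply: eq_card => A; rewrite inE.
Qed.
Lemma pigeon (p t l m r xi : nat) (ar : nat -> nat) (hxi : 0 < xi) :
 (forall a' : nat -> nat, (forall q, 1 <= q <= t -> a' q < xi) ->
     #|CC p t l m r a' xi| <= #|CC p t l m r ar xi|) ->
 #|[set z : {ffun 'I_m -> 'Z_p} | wtH z == r]| <= xi ^ t * #|CC p t l m r ar xi|.
Proof.
move=> hmax.
pose af (g : {ffun 'I_t -> 'I_xi}) (q : nat) : nat :=
  if @insub _ (fun k => k < t) _ q.-1 is Some i then val (g i) else 0.
have afb : forall g q, 1 <= q <= t -> af g q < xi.
  move=> g q _; rewrite /af; case: insub => [i|] //; exact: ltn_ord.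
pose gz (z : {ffun 'I_m -> 'Z_p}) : {ffun 'I_t -> 'I_xi} :=
  [ffun q : 'I_t => Ordinal (ltn_pmod (@blocksum p m l q.+1 z) hxi)].
rewrite -sum1_card.
rewrite (partition_big gz xpredT) //.
apply: leq_trans (_ : \sum_(g : {ffun 'I_t -> 'I_xi}) #|CC p t l m r ar xi| <= _); last first.
  by rewrite sum_nat_const card_ffun !card_ord.
apply: leq_sum => g _.
apply: leq_trans (hmax _ (afb g)).
rewrite sum1dep_card; apply: subset_leq_card; apply/subsetP => z.
rewrite !inE => /andP [hw /eqP hg]; rewrite hw /=.
apply/forallP => q.
rewrite /af /= (_ : @insub _ (fun k => k < t) _ q = Some q); last by apply: valK.
by rewrite -hg ffunE /= modn_mod.
Qed.
Lemma card_C1 p n l t xi a : 1 < p -> l < n -> 0 < l ->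
  #|C1 p n l t xi a| = p ^ l * #|[set z : {ffun 'I_(n - l) -> 'Z_p} |
        z \in CC p t l (n - l) (wtH z) (a (wtH z)) (xi (wtH z))]|.
Proof.
move=> hp hln hl0.
set S := [set z : {ffun 'I_(n - l) -> 'Z_p} | _].
have hle : l <= n by apply: ltnW.
pose F (x : {ffun 'I_n -> 'Z_p}) :=
  ([ffun i : 'I_l => x (widen_ord hle i)], @phiz p n l x).
have Finj : injective F.
  move=> x x' [/ffunP hy /ffunP hz]; apply/ffunP => k.
  have E : forall k (hk : k < n), x (Ordinal hk) = x' (Ordinal hk).
    elim/ltn_ind => k0 IH hk.
    case: (ltnP k0 l) => hkl.
      have := hy (Ordinal hkl); rewrite !ffunE.
      by have -> : widen_ord hle (Ordinal hkl) = Ordinal hk by apply: val_inj.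
    have hj : k0 - l < n - l by lia.
    have := hz (Ordinal hj); rewrite !ffunE.
    have -> : Ordinal (shift_lt (Ordinal hj)) = Ordinal hk
      by apply: val_inj => /=; lia.
    have hj' : k0 - l < n by lia.
    have -> : widen_ord (leq_subr l n) (Ordinal hj) = Ordinal hj' by apply: val_inj.
    have hlt : k0 - l < k0 by lia.
    rewrite (IH (k0 - l) hlt hj').
    by move/addIr.
  by case: k => k hk; apply: E.
have cardT : #|{ffun 'I_n -> 'Z_p}| = #|{: {ffun 'I_l -> 'Z_p} * {ffun 'I_(n - l) -> 'Z_p}}|.
  rewrite card_prod !card_ffun !card_ord !Zp_cast // -expnD; congr (_ ^ _); lia.
have Fsurj : forall w, exists x, F x = w.
  move=> w.
  have : w \in F @: setT.
    have -> : F @: setT = setT; last by rewrite inE.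
    apply/eqP; rewrite eqEcard subsetT /= card_imset // cardsT cardsT.
    by rewrite cardT.
  by case/imsetP => x _ ->; exists x.
rewrite -(card_imset _ Finj).
have -> : F @: C1 p n l t xi a = setX setT S.
  apply/setP => w; rewrite !inE /=.
  apply/imsetP/idP.
    by move=> [x]; rewrite !inE /= => hx ->; move: hx; rewrite inE.
  move=> hw; have [x hx] := Fsurj w; exists x => //.
  by move: hw; rewrite -hx /= => hw; rewrite inE /= inE.
rewrite cardsX cardsT card_ffun !card_ord; congr (_ * _); congr (_ ^ _); exact: Zp_cast.
Qed.
Lemma sum_CC p t l m (xi : nat -> nat) (a : nat -> nat -> nat) :
  \sum_(0 <= r < m.+1) #|CC p t l m r (a r) (xi r)| <=
  #|[set z : {ffun 'I_m -> 'Z_p} | z \in CC p t l m (wtH z) (a (wtH z)) (xi (wtH z))]|.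
Proof.
rewrite -sum1_card.
have -> : \sum_(0 <= r < m.+1) #|CC p t l m r (a r) (xi r)| =
   \sum_(0 <= r < m.+1) \sum_(z : {ffun 'I_m -> 'Z_p}) (z \in CC p t l m r (a r) (xi r)).
  apply: eq_bigr => r _; rewrite -sum1_card big_mkcond /=.
  by apply: eq_bigr => z _; case: (z \in _).
rewrite exchange_big /= [X in _ <= X]big_mkcond /=.
apply: leq_sum => z _.
rewrite big_mkord.
rewrite (eq_bigr (fun r : 'I_m.+1 => if r == wtH z :> nat then
           nat_of_bool (z \in CC p t l m (wtH z) (a (wtH z)) (xi (wtH z))) else 0)); last first.
  move=> r _; case: eqP => [<-|hne] //.
  by rewrite inE; case: eqP => // /esym.
rewrite -big_mkcond (big_ord1_eq _ (fun _ => _) (wtH z) m.+1) inE.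
case: ifP => // _; rewrite !inE; by case: ifP.
Qed.

Theorem lemma5 (p n l t : nat) (xi : nat -> nat) (a : nat -> nat -> nat) :
  2 <= p -> 0 < n -> 0 < l -> 0 < t -> l < n ->
  (forall r, r <= n - l ->
     prime (xi r) /\ maxn t r < xi r <= 2 * maxn t r) ->
  (forall r, r <= n - l ->
     (forall q, 1 <= q <= t -> a r q < xi r) /\
     (forall a' : nat -> nat, (forall q, 1 <= q <= t -> a' q < xi r) ->
        #|CC p t l (n - l) r a' (xi r)| <= #|CC p t l (n - l) r (a r) (xi r)|)) ->
  ((p ^ l)%:R * \sum_(0 <= r < (n - l).+1)
       ('C(n - l, r) * (p - 1) ^ r)%:R / ((2 * maxn t r) ^ t)%:R
    <= (#|C1 p n l t xi a|)%:R :> rat)%R.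
Proof.
move=> hp hn hl ht hln hxi ha.
rewrite card_C1 // natrM.
apply: ler_wpM2l; first by rewrite ler0n.
apply: le_trans (_ : (\sum_(0 <= r < (n - l).+1) (#|CC p t l (n - l) r (a r) (xi r)|)%:R <= _)%R).
  apply: ler_sum_nat => r /andP [_ hr].
  have hr' : r <= n - l by [].
  have [_ /andP [hx1 hx2]] := hxi r hr'.
  have hx0 : 0 < xi r by apply: leq_ltn_trans hx1.
  have hD : 0 < (2 * maxn t r) ^ t by rewrite expn_gt0; apply/orP; left; lia.
  rewrite ler_pdivrMr ?ltr0n // -natrM ler_nat.
  rewrite -card_weight //.
  apply: leq_trans (pigeon _ _ _ _ _ _ _ hx0 (proj2 (ha r hr'))) _.
  rewrite mulnC leq_mul2l; apply/orP; right.
  by rewrite leq_exp2r.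
by rewrite -natr_sum ler_nat; apply: sum_CC.
Qed.
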